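(* If $\alpha \in \mathbb{R}_{>0}$ is transcendental, then the additive monoid $M_\alpha = \{f(\alpha) \mid f(x) \in \mathbb{N}_0[x,x^{-1}]\}$ is atomic.
   Context: $\mathbb{N}_0[x,x^{-1}]$ denotes the semiring of Laurent polynomials with coefficients in $\mathbb{N}_0$. A (reduced, additive) monoid is atomic if every nonzero element is a sum of atoms, where an atom is a nonzero element that cannot be written as a sum of two nonzero elements. *)

(* Defs.v *)
From HB Require Import structures.
From mathcomp Require Import all_boot all_order all_algebra.
From mathcomp Require Import reals.
Set Implicit Arguments. Unset Strict Implicit. Unset Printing Implicit Defensive.
Import Order.TTheory GRing.Theory Num.Theory.
Local Open Scope ring_scope.

Definition transcendental (R : realType) (a : R) : Prop :=
  forall p : {poly rat}, p != 0 -> ~~ root (map_poly ratr p) a.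

(* Evaluation at a of the Laurent polynomial sum_i s_i x^(i - k) with
   coefficients s_i in N_0; every element of N_0[x,x^-1] has this form. *)
Definition laurent_eval (R : realType) (s : seq nat) (k : nat) (a : R) : R :=
  \sum_(i < size s) (nth 0%N s i)%:R * a ^ (i%:Z - k%:Z).

Definition in_M (R : realType) (a : R) (x : R) : Prop :=
  exists (s : seq nat) (k : nat), x = laurent_eval s k a.

Definition is_atom (R : realType) (a : R) (x : R) : Prop :=
  in_M a x /\ x != 0 /\
  ~ (exists y z : R, [/\ in_M a y, in_M a z, y != 0, z != 0 & x = y + z]).

Definition atomic_M (R : realType) (a : R) : Prop :=
  forall x : R, in_M a x -> x != 0 ->
    exists s : seq R, (forall y, y \in s -> is_atom a y) /\ x = \sum_(y <- s) y.

(* Main.v *)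
Require Import Defs.
From HB Require Import structures.
From mathcomp Require Import all_boot all_order all_algebra.
From mathcomp Require Import reals.
From mathcomp Require Import ring.
Import Order.TTheory GRing.Theory Num.Theory.
Local Open Scope ring_scope.

Section Aux.
Variable R : realType.

Definition Ps (s : seq nat) : {poly rat} :=
  \sum_(i < size s) ((nth 0%N s i)%:R)%:P * 'X^i.

Definition Es (s : seq nat) (a : R) : R :=
  \sum_(i < size s) (nth 0%N s i)%:R * a ^+ i.

Lemma Ps_eval s (a : R) : (map_poly ratr (Ps s)).[a] = Es s a.
Proof.
rewrite /Ps /Es rmorph_sum horner_sum; apply: eq_bigr => i _.
rewrite rmorphM /= map_polyC map_polyXn hornerM hornerC hornerXn.
congr (_ * _); exact: ratr_nat.
Qed.

Lemma Ps_one s : (Ps s).[1] = (\sum_(i < size s) nth 0%N s i)%N%:R.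
Proof.
rewrite /Ps horner_sum natr_sum; apply: eq_bigr => i _.
by rewrite hornerM hornerC hornerXn expr1n mulr1.
Qed.

Lemma expz_sub (a : R) (i k : nat) : a != 0 ->
  a ^ (i%:Z - k%:Z) * a ^+ k = a ^+ i.
Proof.
move=> a0; rewrite exprnP -expfzDr // addrNK -exprnP //.
Qed.

Lemma laurent_Es s k (a : R) : a != 0 -> laurent_eval s k a * a ^+ k = Es s a.
Proof.
move=> a0; rewrite /laurent_eval /Es mulr_suml; apply: eq_bigr => i _.
by rewrite -mulrA expz_sub.
Qed.

Lemma laurent_zero s k (a : R) :
  (\sum_(i < size s) nth 0%N s i)%N = 0%N -> laurent_eval s k a = 0.
Proof.
move/eqP; rewrite sum_nat_eq0 => /forallP H.
rewrite /laurent_eval big1 // => i _.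
by move/implyP: (H i) => /(_ isT) /eqP ->; rewrite mul0r.
Qed.


Lemma atom_in_M (a : R) (j k : nat) : in_M a (a ^ (j%:Z - k%:Z)).
Proof.
exists (rcons (nseq j 0%N) 1%N), k.
rewrite /laurent_eval size_rcons size_nseq big_ord_recr /= big1.
  by rewrite nth_rcons size_nseq ltnn eqxx add0r mul1r.
move=> i _; rewrite nth_rcons size_nseq /= (ltn_ord i) nth_nseq (ltn_ord i).
by rewrite mul0r.
Qed.

Lemma atom_pow (a : R) (j k : nat) : 0 < a -> transcendental a ->
  is_atom a (a ^ (j%:Z - k%:Z)).
Proof.
move=> a0 tr; have a0' : a != 0 by rewrite gt_eqF.
split; first exact: atom_in_M.
split; first exact: expfz_neq0.
move=> [y [z [[s1 [k1 ->]] [s2 [k2 ->]] y0 z0 Hx]]].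
set Q : {poly rat} := 'X^(j + k1 + k2) - (Ps s1 * 'X^(k + k2) + Ps s2 * 'X^(k + k1)).
have rQ : root (map_poly ratr Q) a.
  apply/eqP; rewrite /Q rmorphB rmorphD !rmorphM /= !map_polyXn.
  rewrite hornerD hornerN hornerD !hornerM !hornerXn !Ps_eval.
  rewrite !exprD -(laurent_Es s1 k1 a a0') -(laurent_Es s2 k2 a a0') -(expz_sub a j k a0') Hx.
  ring.
have Q0 : Q = 0.
  by case: (eqVneq Q 0) => // /tr; rewrite rQ.
move/eqP: Q0; rewrite subr_eq0 => /eqP /(congr1 (fun p => p.[1])).
rewrite hornerXn expr1n hornerD !hornerM !hornerXn !expr1n !mulr1 !Ps_one -natrD.
move/esym/eqP; rewrite pnatr_eq1.
case E1: (\sum_(i < size s1) nth 0%N s1 i)%N => [|n1].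
  by move: y0; rewrite laurent_zero ?eqxx.
case E2: (\sum_(i < size s2) nth 0%N s2 i)%N => [|n2].
  by move: z0; rewrite laurent_zero ?eqxx.
by rewrite addSn addnS.
Qed.

Lemma sum_atoms (a : R) s k : 0 < a -> transcendental a ->
  exists l : seq R, (forall y, y \in l -> is_atom a y) /\
    laurent_eval s k a = \sum_(y <- l) y.
Proof.
move=> a0 tr; rewrite /laurent_eval.
apply: (big_ind (fun x => exists l : seq R, (forall y, y \in l -> is_atom a y) /\
    x = \sum_(y <- l) y)).
- by exists [::]; rewrite big_nil.
- move=> x1 x2 [l1 [H1 ->]] [l2 [H2 ->]]; exists (l1 ++ l2); split.
    by move=> y; rewrite mem_cat => /orP [/H1|/H2].
  by rewrite big_cat.
- move=> i _; exists (nseq (nth 0%N s i) (a ^ (i%:Z - k%:Z))); split.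
    by move=> y /nseqP [-> _]; exact: atom_pow.
  elim: (nth 0%N s i) => [|n IH]; first by rewrite big_nil mul0r.
  by rewrite /= big_cons -IH -add1n natrD mulrDl mul1r.
Qed.

End Aux.

Theorem corollary3p2 (R : realType) (alpha : R) :
  0 < alpha -> transcendental alpha -> atomic_M alpha.
Proof.
move=> a0 tr x [s [k ->]] _; exact: sum_atoms.
Qed.
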